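(* Let $i\ge2$, $j\ge1$ and $k\ge1$ be integers and let $x=(10)^i0(10)^j0(10)^k$. Then $[x]_2\notin R$.
   Context: Stern's sequence $(a(n))_{n\ge0}$: $a(0)=0$, $a(1)=1$, $a(2n)=a(n)$, $a(2n+1)=a(n)+a(n+1)$; $s(n)=a(n+1)$. $R$ is the set of record-setters of $s$, i.e. indices $v\ge0$ with $s(i)<s(v)$ for all $i<v$. For a binary string $x$, $[x]_2$ is the integer it represents in base 2; $x^i$ denotes $i$-fold concatenation. *)

(* Defs.v *)
From mathcomp Require Import all_boot.
Set Implicit Arguments. Unset Strict Implicit. Unset Printing Implicit Defensive.

(* Stern's diatomic sequence a(0)=0, a(1)=1, a(2n)=a(n), a(2n+1)=a(n)+a(n+1),
   computed with fuel (fuel n suffices since all recursive arguments are < n). *)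
Fixpoint stern_aux (fuel n : nat) : nat :=
  match fuel with
  | 0 => 0
  | f.+1 => if n <= 1 then n
            else if odd n then stern_aux f n./2 + stern_aux f n./2.+1
            else stern_aux f n./2
  end.
Definition stern (n : nat) : nat := stern_aux n.+1 n.

Definition s (n : nat) : nat := stern n.+1.

Definition record_setter (v : nat) : Prop := forall i, i < v -> s i < s v.

(* binary strings, most significant bit first *)
Definition bin_val (x : seq bool) : nat := foldl (fun (acc : nat) (b : bool) => acc.*2 + nat_of_bool b) 0 x.

Definition srep (i : nat) (x : seq bool) : seq bool := flatten (nseq i x) : seq bool.

(* Main.v *)
Require Import Defs.
From mathcomp Require Import all_boot.
From mathcomp Require Import zify.

Lemma stern_aux_S f n : stern_aux f.+1 n =
  if n <= 1 then n else if odd n then stern_aux f n./2 + stern_aux f n./2.+1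
  else stern_aux f n./2.
Proof. by []. Qed.

Lemma stern_aux_fuel f g n : n < f -> n < g -> stern_aux f n = stern_aux g n.
Proof.
elim: f g n => [|f IH] [|g] n //= Hf Hg.
case: ifP => // Hn; case: ifP => Ho.
- move: (odd_double_half n); rewrite Ho => Hh.
  rewrite (IH g n./2) ?(IH g n./2.+1) //; lia.
- move: (odd_double_half n); rewrite Ho => Hh.
  rewrite (IH g n./2) //; lia.
Qed.

Lemma stern_eq n f : n < f -> stern n = stern_aux f n.
Proof. by move=> H; rewrite /stern (@stern_aux_fuel _ f). Qed.

Lemma stern_even n : stern (n.*2) = stern n.
Proof.
case: n => [|n] //.
rewrite /stern stern_aux_S.
have -> : (n.+1.*2 <= 1) = false by lia.
rewrite odd_double half_double.
by apply/esym/stern_eq; lia.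
Qed.

Lemma stern_odd n : stern (n.*2.+1) = stern n + stern n.+1.
Proof.
case: n => [|n] //.
rewrite /stern stern_aux_S.
have -> : (n.+1.*2.+1 <= 1) = false by lia.
have -> : odd (n.+1.*2.+1) = true by rewrite /= odd_double.
have -> : (n.+1.*2.+1)./2 = n.+1 := half_bit_double n.+1 true.
by rewrite -!stern_eq //; lia.
Qed.

Definition stp (p : nat * nat) (b : bool) : nat * nat :=
  if b then (p.1 + p.2, p.2) else (p.1, p.1 + p.2).

Definition fb (acc : nat) (b : bool) : nat := acc.*2 + nat_of_bool b.

Lemma st_foldl w : (stern (bin_val w), stern (bin_val w).+1) = foldl stp (0, 1) w.
Proof.
elim/last_ind: w => [|w b IH] //.
rewrite -cats1 foldl_cat -IH /bin_val foldl_cat -/(bin_val w) /=.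
case: b => /=.
- by rewrite addn1 -doubleS stern_even stern_odd.
- by rewrite addn0 stern_even stern_odd.
Qed.

Definition Mf (p : nat * nat) : nat * nat := (p.1 + p.2, p.1 + p.2 + p.2).
Definition Zf (p : nat * nat) : nat * nat := (p.1, p.1 + p.2).

Lemma foldl_srep n p : foldl stp p (srep n [:: true; false]) = iter n Mf p.
Proof.
elim: n p => [|n IH] [p1 p2] //=.
by rewrite /srep /= -/(srep n _) IH -iterS iterSr.
Qed.

Definition padd (x y : nat * nat) := (x.1 + y.1, x.2 + y.2).

Lemma Mf_add x y : Mf (padd x y) = padd (Mf x) (Mf y).
Proof. case: x => ? ?; case: y => ? ? /=; rewrite /Mf /padd /=; congr pair; lia. Qed.
Lemma Zf_add x y : Zf (padd x y) = padd (Zf x) (Zf y).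
Proof. case: x => ? ?; case: y => ? ? /=; rewrite /Zf /padd /=; congr pair; lia. Qed.
Lemma iterM_add n x y : iter n Mf (padd x y) = padd (iter n Mf x) (iter n Mf y).
Proof. by elim: n => //= n ->; rewrite Mf_add. Qed.

Lemma rec_gen (L : nat * nat -> nat) (HL : forall a b, L (padd a b) = L a + L b) x n :
  L (iter n.+2 Mf x) + L (iter n Mf x) = 3 * L (iter n.+1 Mf x).
Proof.
rewrite -HL !iterSr -iterM_add.
have -> : padd (Mf (Mf x)) x = padd (Mf x) (padd (Mf x) (Mf x)).
  case: x => p q; rewrite /padd /Mf /=; congr pair; lia.
rewrite !iterM_add !HL; lia.
Qed.

Definition u0 : nat * nat := (0, 1).
Definition V1 a b c :=
  (iter c Mf (Mf (Zf (iter b Mf (Mf (Zf (iter a Mf (Mf (Mf u0))))))))).2.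
Definition Y1 a b c :=
  (Zf (iter c Mf (Mf (iter b Mf (Mf (iter a Mf (Mf (Zf (Mf u0))))))))).2.

From Stdlib Require Import BinInt.
Definition D a b c : Z := (Z.of_nat (Y1 a b c) - Z.of_nat (V1 a b c))%Z.

Arguments D a%_nat_scope b%_nat_scope c%_nat_scope.

Lemma snd_add a b : (padd a b).2 = a.2 + b.2. Proof. by []. Qed.

Lemma lin_snd a b : (padd a b).2 = a.2 + b.2. Proof. by []. Qed.
Lemma lin_Zf a b : (Zf (padd a b)).2 = (Zf a).2 + (Zf b).2.
Proof. by rewrite Zf_add. Qed.

Lemma Drec_c a b c : D a b c.+2 = (3 * D a b c.+1 - D a b c)%Z.
Proof.
rewrite /D /Y1 /V1.
have H1 := @rec_gen (fun p => (Zf p).2) lin_Zf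
   (Mf (iter b Mf (Mf (iter a Mf (Mf (Zf (Mf u0)))))))  c.
have H2 := @rec_gen (fun p => p.2) lin_snd
   (Mf (Zf (iter b Mf (Mf (Zf (iter a Mf (Mf (Mf u0)))))))) c.
cbv beta in H1, H2; lia.
Qed.

Lemma Drec_b a b c : D a b.+2 c = (3 * D a b.+1 c - D a b c)%Z.
Proof.
rewrite /D /Y1 /V1.
have H1 := @rec_gen (fun p => (Zf (iter c Mf (Mf p))).2)
  ltac:(by move=> ? ?; cbv beta; rewrite Mf_add iterM_add Zf_add)
   (Mf (iter a Mf (Mf (Zf (Mf u0))))) b.
have H2 := @rec_gen (fun p => (iter c Mf (Mf (Zf p))).2)
  ltac:(by move=> ? ?; cbv beta; rewrite Zf_add Mf_add iterM_add)
   (Mf (Zf (iter a Mf (Mf (Mf u0))))) b.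
cbv beta in H1, H2; lia.
Qed.

Lemma Drec_a a b c : D a.+2 b c = (3 * D a.+1 b c - D a b c)%Z.
Proof.
rewrite /D /Y1 /V1.
have H1 := @rec_gen (fun p => (Zf (iter c Mf (Mf (iter b Mf (Mf p))))).2)
  ltac:(by move=> ? ?; cbv beta; rewrite Mf_add iterM_add Mf_add iterM_add Zf_add)
   (Mf (Zf (Mf u0))) a.
have H2 := @rec_gen (fun p => (iter c Mf (Mf (Zf (iter b Mf (Mf (Zf p)))))).2)
  ltac:(by move=> ? ?; cbv beta; rewrite Zf_add Mf_add iterM_add Zf_add Mf_add iterM_add)
   (Mf (Mf u0)) a.
cbv beta in H1, H2; lia.
Qed.

Local Notation "x ⩽ y" := (Z.le x y) (at level 70, no associativity).

Lemma rec_pos (g : nat -> Z) :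
  (forall n, g n.+2 = (3 * g n.+1 - g n)%Z) -> (0 ⩽ g 0%nat)%Z -> (g 0%nat ⩽ g 1%nat)%Z ->
  forall n, (0 ⩽ g n)%Z /\ (g n ⩽ g n.+1)%Z.
Proof.
move=> Hr H0 H1; elim=> [|n [IH1 IH2]]; first by split.
have := Hr n; lia.
Qed.

Ltac cmp := rewrite /D; vm_compute; discriminate.

Lemma Dbase0 a b : (0 ⩽ D a b 0)%Z /\ (D a b 0 ⩽ D a b 1)%Z.
Proof.
have HA a' : (0 ⩽ D a' 0 0)%Z /\ (D a' 0 0 ⩽ D a'.+1 0 0)%Z.
  apply: (@rec_pos (fun a => D a 0 0)); [by move=> n; apply: Drec_a | cmp | cmp].
have HB a' : (0 ⩽ D a' 1 0 - D a' 0 0)%Z /\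
   (D a' 1 0 - D a' 0 0 ⩽ D a'.+1 1 0 - D a'.+1 0 0)%Z.
  apply: (@rec_pos (fun a => (D a 1 0 - D a 0 0)%Z)).
  - by move=> n; rewrite !Drec_a; lia.
  - cmp.
  - cmp.
have HC a' : (0 ⩽ D a' 0 1 - D a' 0 0)%Z /\
   (D a' 0 1 - D a' 0 0 ⩽ D a'.+1 0 1 - D a'.+1 0 0)%Z.
  apply: (@rec_pos (fun a => (D a 0 1 - D a 0 0)%Z)).
  - by move=> n; rewrite !Drec_a; lia.
  - cmp.
  - cmp.
have HE a' : (0 ⩽ (D a' 1 1 - D a' 1 0) - (D a' 0 1 - D a' 0 0))%Z /\
   ((D a' 1 1 - D a' 1 0) - (D a' 0 1 - D a' 0 0) <=
    (D a'.+1 1 1 - D a'.+1 1 0) - (D a'.+1 0 1 - D a'.+1 0 0))%Z.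
  apply: (@rec_pos (fun a => ((D a 1 1 - D a 1 0) - (D a 0 1 - D a 0 0))%Z)).
  - by move=> n; rewrite !Drec_a; lia.
  - cmp.
  - cmp.
have P1 := @rec_pos (fun b => D a b 0) (fun n => Drec_b a n 0).
have P2 := @rec_pos (fun b => (D a b 1 - D a b 0)%Z)
  (fun n => ltac:(cbv beta; rewrite !Drec_b; lia)).
have [h1 _] := HA a. have [h2 _] := HB a. have [h3 _] := HC a. have [h4 _] := HE a.
have [q1 _] := P1 h1 ltac:(lia) b.
have [q2 _] := P2 ltac:(lia) ltac:(lia) b.
split; lia.
Qed.

Lemma Dpos a b c : (0 ⩽ D a b c)%Z.
Proof.
have [h1 h2] := Dbase0 a b.
have [] := @rec_pos (fun c => D a b c) (fun n => Drec_c a b n) h1 h2 c.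
by [].
Qed.

Lemma foldl_fb acc w :
  foldl (fun (acc : nat) (b : bool) => acc.*2 + nat_of_bool b) acc w
  = acc * 2 ^ (size w) + bin_val w.
Proof.
elim: w acc => [|x w IH] acc /=; first by rewrite /bin_val /=; lia.
rewrite /bin_val /= !IH expnS; case: x => /=; nia.
Qed.

Lemma bin_lt w : bin_val w < 2 ^ (size w).
Proof.
elim: w => [|x w IH] //.
rewrite /bin_val /= foldl_fb -/(bin_val w) /= expnS; case: x => /=; nia.
Qed.

Lemma lex p r1 r2 : size r1 = size r2 ->
  bin_val (p ++ false :: r1) < bin_val (p ++ true :: r2).
Proof.
move=> Hs.
rewrite /bin_val !foldl_cat -/(bin_val p) !foldl_fb /bin_val /= !foldl_fb.
rewrite -/(bin_val r1) -/(bin_val r2) /= Hs.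
have := bin_lt r1; rewrite Hs; nia.
Qed.

Lemma size_srep n x : size (srep n x) = n * size x.
Proof. elim: n => [|n IH] //; rewrite /srep /= size_cat -/(srep n x) IH; lia. Qed.

Lemma srep_add m n x : srep (m + n) x = srep m x ++ srep n x.
Proof. elim: m => [|m IH] //; rewrite /srep /= -catA -/(srep _ x) IH. by []. Qed.

Lemma foldl_cons (T R : Type) (f : R -> T -> R) z x l : foldl f z (x :: l) = foldl f (f z x) l.
Proof. by []. Qed.

Lemma s_word w : s (bin_val w) = (foldl stp (0, 1) w).2.
Proof. by rewrite /s -st_foldl. Qed.

Theorem mainTheorem17 (i j k : nat) :
  2 <= i -> 1 <= j -> 1 <= k ->
  ~ record_setter
      (bin_val (srep i [:: true; false] ++ [:: false] ++
                srep j [:: true; false] ++ [:: false] ++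
                srep k [:: true; false])).
Proof.
case: i => [|[|a]] // _; case: j => [|b] // _; case: k => [|c] // _.
move=> Hrec.
pose wy := [:: true; false] ++ false :: (srep (a + b + c + 3) [:: true; false] ++ [:: false]).
have Hlt : bin_val wy < bin_val (srep a.+2 [:: true; false] ++ [:: false] ++
                srep b.+1 [:: true; false] ++ [:: false] ++
                srep c.+1 [:: true; false]).
  have -> : srep a.+2 [:: true; false] ++ [:: false] ++
                srep b.+1 [:: true; false] ++ [:: false] ++
                srep c.+1 [:: true; false] =
            [:: true; false] ++ true :: (false :: srep a [:: true; false] ++ [:: false] ++
                srep b.+1 [:: true; false] ++ [:: false] ++
                srep c.+1 [:: true; false]) by [].
  apply: lex; have sz : forall (x : bool) l, size (x :: l) = (size l).+1 by [].
  rewrite size_cat size_srep [RHS]sz !size_cat !size_srep /=; lia.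
have Ev : s (bin_val (srep a.+2 [:: true; false] ++ [:: false] ++
                srep b.+1 [:: true; false] ++ [:: false] ++
                srep c.+1 [:: true; false])) = V1 a b c.
  by rewrite s_word !foldl_cat !foldl_srep.
have Ey : s (bin_val wy) = Y1 a b c.
  rewrite s_word /wy (_ : a + b + c + 3 = a.+1 + (b.+1 + c.+1)); last by lia.
  rewrite !srep_add foldl_cat foldl_cons !foldl_cat !foldl_srep.
  by [].
have H := Hrec _ Hlt.
have HD := Dpos a b c; move: HD; rewrite /D -Ev -Ey; lia.
Qed.
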